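(* Let $p$ be a positive integer, $L,E,\sigma>0$ with $L,E\in 2^{-p}\mathbb{Z}$, and $x\in\mathcal{A}_{p,E}$. If $y$ is drawn with probability mass function $f^{(\mathtt{CLap})}_{x,\sigma}$ on $\mathcal{B}_{p,L+E}$, then \[ \mathbb{E}(y)=x\cdot\frac{\sigma(1-e^{-L/\sigma})-e^{-L/\sigma}L}{\sigma(1-e^{-L/\sigma})+e^{-L/\sigma}E}-\frac{2^{-p}}{2}. \]
   Context: For $p\in\mathbb{Z}_{>0}$ and $B>0$, $2^{-p}\mathbb{Z}=\{a/2^p: a\in\mathbb{Z}\}$, $\mathcal{A}_{p,B}:=[-B,B]\cap 2^{-p}\mathbb{Z}$ and $\mathcal{B}_{p,B}:=\mathcal{A}_{p,B}\setminus\{B\}$. The truncated cumulative Laplace mechanism with parameters $L,E,\sigma>0$ maps $x\in\mathcal{A}_{p,E}$ to $y\in\mathcal{B}_{p,L+E}$ with probability $f^{(\mathtt{CLap})}_{x,\sigma}(y)=\frac{1}{\lambda^{(\mathtt{CLap})}_{L,E,\sigma}}\int_y^{y+2^{-p}}e^{-\min(|r-x|,L)/\sigma}dr$, where $\lambda^{(\mathtt{CLap})}_{L,E,\sigma}=\sum_{y\in\mathcal{B}_{p,L+E}}\int_y^{y+2^{-p}}e^{-\min(|r-x|,L)/\sigma}dr$ is the normalizing constant. *)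

(* Defs.v *)
From Stdlib Require Import Reals ZArith List.
From Coquelicot Require Import Coquelicot.
Open Scope R_scope.

Definition Zrange (M : Z) : list Z :=
  map (fun k => (- M + Z.of_nat k)%Z) (seq 0 (Z.to_nat (2 * M + 1))).

(* A_{p,B} = [-B,B] ∩ 2^{-p} Z, enumerated (without repetition) as a list.
   Every a with |a/2^p| <= B satisfies |a| <= |up (B*2^p)|. *)
Definition gridA (p : nat) (B : R) : list R :=
  filter (fun y => if Rle_dec (- B) y then (if Rle_dec y B then true else false) else false)
    (map (fun a => IZR a / 2 ^ p) (Zrange (Z.abs (up (B * 2 ^ p))))).

Definition gridB (p : nat) (B : R) : list R :=
  filter (fun y => if Req_EM_T y B then false else true) (gridA p B).

Definition sumR (l : list R) : R := fold_right Rplus 0 l.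

Definition clap_kernel (L sigma x r : R) : R :=
  exp (- Rmin (Rabs (r - x)) L / sigma).

Definition clap_cell (p : nat) (L sigma x y : R) : R :=
  RInt (clap_kernel L sigma x) y (y + / 2 ^ p).

Definition clap_lambda (p : nat) (L E sigma x : R) : R :=
  sumR (map (clap_cell p L sigma x) (gridB p (L + E))).

Definition clap_pmf (p : nat) (L E sigma x y : R) : R :=
  clap_cell p L sigma x y / clap_lambda p L E sigma x.

Definition clap_mean (p : nat) (L E sigma x : R) : R :=
  sumR (map (fun y => y * clap_pmf p L E sigma x y) (gridB p (L + E))).

(* Main.v *)
Require Import Defs.
From Stdlib Require Import Reals ZArith List Lra Lia.
From Coquelicot Require Import Coquelicot.
Open Scope R_scope.

Lemma RInt_expl (s x a b : R) : s <> 0 ->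
  RInt (fun r => exp (s * (r - x))) a b = (exp (s * (b - x)) - exp (s * (a - x))) / s.
Proof.
  intros Hs. apply is_RInt_unique.
  replace ((exp (s * (b - x)) - exp (s * (a - x))) / s)
    with (minus ((fun r => exp (s * (r - x)) / s) b) ((fun r => exp (s * (r - x)) / s) a)).
  2:{ unfold minus, plus, opp; simpl. field. auto. }
  apply (is_RInt_derive (fun r => exp (s * (r - x)) / s)).
  - intros r _. auto_derive; auto. unfold Rminus. field. auto.
  - intros r _. apply (ex_derive_continuous (fun r => exp (s * (r - x)))). auto_derive. auto.
Qed.

Lemma cell_const p L sigma x y : 0 < sigma -> 0 < L ->
  (y + / 2 ^ p <= x - L \/ x + L <= y) ->
  clap_cell p L sigma x y = exp (- L / sigma) * / 2 ^ p.
Proof.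
  intros Hs HL Hy. assert (Hh : 0 < / 2 ^ p) by (apply Rinv_0_lt_compat, pow_lt; lra).
  unfold clap_cell. rewrite (RInt_ext _ (fun _ => exp (- L / sigma))).
  - rewrite RInt_const. unfold scal; simpl. unfold mult; simpl. ring.
  - intros r Hr. rewrite Rmin_left in Hr by lra. rewrite Rmax_right in Hr by lra.
    unfold clap_kernel. rewrite Rmin_right; auto.
    destruct Hy; [rewrite Rabs_left1 by lra | rewrite Rabs_right by lra]; lra.
Qed.

Lemma cell_B p L sigma x y : 0 < sigma ->
  x - L <= y -> y + / 2 ^ p <= x ->
  clap_cell p L sigma x y = sigma * (exp ((y + / 2 ^ p - x) / sigma) - exp ((y - x) / sigma)).
Proof.
  intros Hs H1 H2. assert (Hh : 0 < / 2 ^ p) by (apply Rinv_0_lt_compat, pow_lt; lra).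
  unfold clap_cell. rewrite (RInt_ext _ (fun r => exp (/sigma * (r - x)))).
  - rewrite RInt_expl by (apply Rinv_neq_0_compat; lra).
    replace (/ sigma * (y + / 2 ^ p - x)) with ((y + / 2 ^ p - x) / sigma) by (unfold Rdiv; ring).
    replace (/ sigma * (y - x)) with ((y - x) / sigma) by (unfold Rdiv; ring).
    field. lra.
  - intros r Hr. rewrite Rmin_left in Hr by lra. rewrite Rmax_right in Hr by lra.
    unfold clap_kernel. rewrite Rabs_left1 by lra. rewrite Rmin_left by lra.
    f_equal. field. lra.
Qed.

Lemma cell_C p L sigma x y : 0 < sigma ->
  x <= y -> y + / 2 ^ p <= x + L ->
  clap_cell p L sigma x y = sigma * (exp (- (y - x) / sigma) - exp (- (y + / 2 ^ p - x) / sigma)).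
Proof.
  intros Hs H1 H2. assert (Hh : 0 < / 2 ^ p) by (apply Rinv_0_lt_compat, pow_lt; lra).
  unfold clap_cell. rewrite (RInt_ext _ (fun r => exp (- /sigma * (r - x)))).
  - rewrite RInt_expl by (apply Ropp_neq_0_compat, Rinv_neq_0_compat; lra).
    replace (- / sigma * (y + / 2 ^ p - x)) with (- (y + / 2 ^ p - x) / sigma) by (unfold Rdiv; ring).
    replace (- / sigma * (y - x)) with (- (y - x) / sigma) by (unfold Rdiv; ring).
    field. lra.
  - intros r Hr. rewrite Rmin_left in Hr by lra. rewrite Rmax_right in Hr by lra.
    unfold clap_kernel. rewrite Rabs_right by lra. rewrite Rmin_left by lra.
    f_equal. field. lra.
Qed.

Fixpoint prog (h s : R) (n : nat) : list R :=
  match n with O => nil | S n => s :: prog h (s + h) n end.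

Lemma prog_congr h s s' n : s = s' -> prog h s n = prog h s' n.
Proof. intros ->; auto. Qed.

Lemma prog_app h n1 : forall s n2, prog h s (n1 + n2) = prog h s n1 ++ prog h (s + INR n1 * h) n2.
Proof.
  induction n1; intros s n2.
  - simpl. apply prog_congr. ring.
  - rewrite Nat.add_succ_l. cbn [prog app]. f_equal. rewrite IHn1. f_equal. apply prog_congr. rewrite S_INR. ring.
Qed.

Lemma prog_snoc h s n : prog h s (S n) = prog h s n ++ (s + INR n * h) :: nil.
Proof. replace (S n) with (n + 1)%nat by lia. rewrite prog_app. reflexivity. Qed.

Lemma sumR_app l1 l2 : sumR (l1 ++ l2) = sumR l1 + sumR l2.
Proof. induction l1; simpl; [ring | rewrite IHl1; ring]. Qed.

Lemma sumR_cons a l : sumR (a :: l) = a + sumR l.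
Proof. reflexivity. Qed.
Lemma sumR_nil : sumR nil = 0.
Proof. reflexivity. Qed.

Lemma sum_ext_prog h (f g : R -> R) n : forall s,
  (forall k, (k < n)%nat -> f (s + INR k * h) = g (s + INR k * h)) ->
  sumR (map f (prog h s n)) = sumR (map g (prog h s n)).
Proof.
  induction n; intros s H; cbn [prog map sumR fold_right]; auto.
  f_equal.
  - specialize (H 0%nat ltac:(lia)). simpl in H. replace (s + 0 * h) with s in H by ring. auto.
  - apply IHn. intros k Hk. specialize (H (S k) ltac:(lia)). rewrite S_INR in H.
    replace (s + h + INR k * h) with (s + (INR k + 1) * h) by ring. auto.
Qed.

Lemma sum_div (f : R -> R) c l : sumR (map (fun y => f y / c) l) = sumR (map f l) / c.
Proof. induction l; simpl. unfold Rdiv; ring. rewrite IHl. unfold Rdiv; ring. Qed.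



Lemma sum_lin h c n : forall s, sumR (map (fun y => y * c) (prog h s n)) = c * (INR n * s + h * INR n * (INR n - 1) / 2).
Proof.
  induction n; intros s; [simpl; field | rewrite S_INR; simpl; rewrite IHn; field].
Qed.

Lemma sum_cst h c n : forall s, sumR (map (fun y => c) (prog h s n)) = c * INR n.
Proof.
  induction n; intros s; [simpl; ring | rewrite S_INR; simpl; rewrite IHn; ring].
Qed.

Lemma central h sigma x : 0 < sigma -> forall l,
  sumR (map (fun y => y * (sigma * (exp ((y + h - x) / sigma) - exp ((y - x) / sigma)))) (prog h (x - INR l * h) l))
  + sumR (map (fun y => y * (sigma * (exp (- (y - x) / sigma) - exp (- (y + h - x) / sigma)))) (prog h x l))
  = (2 * x - h) * sigma * (1 - exp (- (INR l * h) / sigma))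
  /\
  sumR (map (fun y => sigma * (exp ((y + h - x) / sigma) - exp ((y - x) / sigma))) (prog h (x - INR l * h) l))
  + sumR (map (fun y => sigma * (exp (- (y - x) / sigma) - exp (- (y + h - x) / sigma))) (prog h x l))
  = 2 * sigma * (1 - exp (- (INR l * h) / sigma)).
Proof.
  intros Hs l. induction l as [|l [IH1 IH2]].
  - simpl. replace (- (0 * h) / sigma) with 0 by (unfold Rdiv; ring). rewrite exp_0. split; ring.
  - rewrite !(prog_snoc h x l). cbn [prog].
    rewrite (prog_congr h (x - INR (S l) * h + h) (x - INR l * h)) by (rewrite S_INR; ring).
    rewrite !map_app, !sumR_app. cbn [map]. rewrite !sumR_cons, sumR_nil.
    replace ((x - INR (S l) * h + h - x) / sigma) with (- (INR l * h) / sigma) by (rewrite S_INR; field; lra).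
    replace ((x - INR (S l) * h - x) / sigma) with (- (INR (S l) * h) / sigma) by (field; lra).
    replace (- (x + INR l * h - x) / sigma) with (- (INR l * h) / sigma) by (field; lra).
    replace (- (x + INR l * h + h - x) / sigma) with (- (INR (S l) * h) / sigma) by (rewrite S_INR; field; lra).
    rewrite S_INR in *.
    set (E1 := exp (- (INR l * h) / sigma)) in *.
    set (E2 := exp (- ((INR l + 1) * h) / sigma)) in *.
    split.
    + transitivity ((2 * x - h) * sigma * (1 - E1) + (2*x - h) * sigma * (E1 - E2)); [rewrite <- IH1 | ]; ring.
    + transitivity (2 * sigma * (1 - E1) + 2 * sigma * (E1 - E2)); [rewrite <- IH2 | ]; ring.
Qed.

Lemma map_seq_prog h (f : nat -> R) n : forall a, (forall k, f (S k) = f k + h) ->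
  map f (seq a n) = prog h (f a) n.
Proof.
  induction n; intros a H; simpl; auto. f_equal. rewrite IHn by auto. apply prog_congr. auto.
Qed.

Lemma In_prog h y n : forall s, In y (prog h s n) -> exists k, (k < n)%nat /\ y = s + INR k * h.
Proof.
  induction n; intros s Hy; simpl in Hy. contradiction.
  destruct Hy as [<- | Hy].
  - exists 0%nat. split. lia. simpl. ring.
  - destruct (IHn _ Hy) as [k [Hk ->]]. exists (S k). split. lia. rewrite S_INR. ring.
Qed.

Lemma filter_id {A} (f : A -> bool) l : (forall a, In a l -> f a = true) -> filter f l = l.
Proof.
  induction l; intros H; simpl; auto. rewrite H by (left; auto). f_equal. apply IHl. intros; apply H; right; auto.
Qed.

Lemma filter_cons_f {A} (f : A -> bool) a l : f a = false -> filter f (a :: l) = filter f l.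
Proof. intros H; simpl; rewrite H; auto. Qed.
Lemma filter_cons_t {A} (f : A -> bool) a l : f a = true -> filter f (a :: l) = a :: filter f l.
Proof. intros H; simpl; rewrite H; auto. Qed.

Lemma gridB_eq p M B : (0 <= M)%Z -> B = IZR M / 2 ^ p ->
  gridB p B = prog (/ 2 ^ p) (- B) (2 * Z.to_nat M).
Proof.
  intros HM HB.
  assert (Hp : 0 < 2 ^ p) by (apply pow_lt; lra).
  set (h := / 2 ^ p).
  assert (Hh : 0 < h) by (apply Rinv_0_lt_compat; auto).
  set (K := Z.to_nat M).
  assert (HK : IZR M = INR K) by (unfold K; rewrite INR_IZR_INZ, Z2Nat.id; auto).
  assert (HBK : B = INR K * h) by (rewrite HB, HK; unfold h, Rdiv; ring).
  assert (HK0 : 0 <= INR K * h) by (apply Rmult_le_pos; [apply pos_INR | lra]).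
  unfold gridB, gridA.
  assert (HB2 : B * 2 ^ p = IZR M) by (rewrite HB; field; lra).
  rewrite HB2.
  rewrite <- (up_tech (IZR M) M) by (try lra; apply IZR_lt; lia).
  rewrite Z.abs_eq by lia.
  unfold Zrange. rewrite map_map.
  replace (Z.to_nat (2 * (M + 1) + 1)) with (S ((2 * K + 1) + 1)) by (unfold K; lia).
  set (val := fun k : nat => IZR (- (M + 1) + Z.of_nat k) / 2 ^ p).
  assert (Hval : forall k, val k = - B + (INR k - 1) * h).
  { intros k. unfold val. rewrite plus_IZR, opp_IZR, plus_IZR, <- INR_IZR_INZ, HK, HBK.
    unfold h. simpl (IZR 1). field. lra. }
  change (seq 0 (S (2 * K + 1 + 1))) with (0%nat :: seq 1 (2 * K + 1 + 1)).
  rewrite !seq_app. cbn [map]. rewrite !map_app. cbn [seq map].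
  rewrite (map_seq_prog h val) by (intros k; rewrite !Hval, S_INR; ring).
  replace (val 1%nat) with (- B) by (rewrite Hval; simpl; ring).
  assert (Hf : forall y, - B <= y <= B -> (if Rle_dec (- B) y then if Rle_dec y B then true else false else false) = true).
  { intros y Hy. destruct (Rle_dec (-B) y); [destruct (Rle_dec y B)|]; auto; lra. }
  assert (Hg : forall y, - B > y \/ y > B -> (if Rle_dec (- B) y then if Rle_dec y B then true else false else false) = false).
  { intros y Hy. destruct (Rle_dec (-B) y); [destruct (Rle_dec y B)|]; auto; lra. }
  assert (Hprog : forall y, In y (prog h (-B) (2 * K)) -> - B <= y <= B - h).
  { intros y Hy. destruct (In_prog _ _ _ _ Hy) as [k [Hk ->]].
    assert (0 <= INR k) by apply pos_INR.
    assert (INR k + 1 <= INR (2 * K)) by (rewrite <- S_INR; apply le_INR; lia).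
    rewrite mult_INR in *. simpl (INR 2) in *. nra. }
  set (fA := fun y : R => if Rle_dec (- B) y then if Rle_dec y B then true else false else false).
  set (fB := fun y : R => if Req_dec_T y B then false else true).
  assert (HfB : forall y, y <> B -> fB y = true).
  { intros y Hy. unfold fB. destruct (Req_dec_T y B); auto; lra. }
  assert (HfB' : fB B = false).
  { unfold fB. destruct (Req_dec_T B B); auto; lra. }
  rewrite (filter_cons_f fA) by (apply Hg; rewrite Hval; simpl; lra).
  rewrite !(filter_app fA).
  rewrite (filter_id fA (prog h (- B) (2 * K))) by (intros y Hy; apply Hf; specialize (Hprog y Hy); lra).
  rewrite (filter_cons_t fA) by (apply Hf; rewrite Hval, plus_INR, mult_INR; simpl; rewrite HBK; split; nra).
  rewrite (filter_cons_f fA) by (apply Hg; rewrite Hval, !plus_INR, mult_INR; simpl; rewrite HBK; nra).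
  simpl (filter fA nil).
  replace (val (1 + 2 * K)%nat) with B by (rewrite Hval, plus_INR, mult_INR; simpl; rewrite HBK; nra).
  rewrite !filter_app.
  rewrite (filter_id fB (prog h (- B) (2 * K))) by (intros y Hy; apply HfB; specialize (Hprog y Hy); lra).
  rewrite (filter_cons_f fB) by auto. simpl. rewrite !app_nil_r. reflexivity.
Qed.

Lemma kh_le h k n : 0 < h -> (k < n)%nat -> INR k * h + h <= INR n * h.
Proof.
  intros Hh Hk. assert (INR k + 1 <= INR n) by (rewrite <- S_INR; apply le_INR; lia).
  nra.
Qed.

Theorem mainTheorem11 (p : nat) (L E sigma x : R) :
  (0 < p)%nat -> 0 < L -> 0 < E -> 0 < sigma ->
  (exists a : Z, L = IZR a / 2 ^ p) ->
  (exists a : Z, E = IZR a / 2 ^ p) ->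
  In x (gridA p E) ->
  clap_mean p L E sigma x =
    x * ((sigma * (1 - exp (- L / sigma)) - exp (- L / sigma) * L)
         / (sigma * (1 - exp (- L / sigma)) + exp (- L / sigma) * E))
    - / 2 ^ p / 2.
Proof.
  intros Hp0 HL HE Hs [aL HaL] [aE HaE] Hx.
  assert (Hp : 0 < 2 ^ p) by (apply pow_lt; lra).
  assert (Hh : 0 < / 2 ^ p) by (apply Rinv_0_lt_compat; auto).
  unfold gridA in Hx. apply filter_In in Hx. destruct Hx as [Hx1 Hx2].
  apply in_map_iff in Hx1. destruct Hx1 as [ax [Hxa _]].
  assert (Hxb : - E <= x <= E).
  { destruct (Rle_dec (- E) x); [destruct (Rle_dec x E)|]; try discriminate; lra. }
  assert (HaL' : IZR aL = L * 2 ^ p) by (rewrite HaL; field; lra).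
  assert (HaE' : IZR aE = E * 2 ^ p) by (rewrite HaE; field; lra).
  assert (Hax' : IZR ax = x * 2 ^ p) by (rewrite <- Hxa; field; lra).
  assert (HaL0 : (0 <= aL)%Z) by (apply le_IZR; rewrite HaL'; nra).
  assert (HaE0 : (0 <= aE)%Z) by (apply le_IZR; rewrite HaE'; nra).
  assert (HA0 : (0 <= ax + aE)%Z) by (apply le_IZR; rewrite plus_IZR, HaE', Hax'; nra).
  assert (HD0 : (0 <= aE - ax)%Z) by (apply le_IZR; rewrite minus_IZR, HaE', Hax'; nra).
  set (l := Z.to_nat aL). set (nA := Z.to_nat (ax + aE)). set (nD := Z.to_nat (aE - ax)).
  assert (Hl : INR l = L * 2 ^ p) by (unfold l; rewrite INR_IZR_INZ, Z2Nat.id; auto).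
  assert (HnA : INR nA = (x + E) * 2 ^ p)
    by (unfold nA; rewrite INR_IZR_INZ, Z2Nat.id, plus_IZR, Hax', HaE' by auto; ring).
  assert (HnD : INR nD = (E - x) * 2 ^ p)
    by (unfold nD; rewrite INR_IZR_INZ, Z2Nat.id, minus_IZR, Hax', HaE' by auto; ring).
  assert (Hlh : INR l * / 2 ^ p = L) by (rewrite Hl; field; lra).
  assert (HnAh : INR nA * / 2 ^ p = x + E) by (rewrite HnA; field; lra).
  assert (HnDh : INR nD * / 2 ^ p = E - x) by (rewrite HnD; field; lra).
  assert (HG : gridB p (L + E) = prog (/ 2 ^ p) (- (L + E)) (nA + l + l + nD)).
  { rewrite (gridB_eq p (aL + aE)) by (try lia; rewrite plus_IZR, HaL, HaE; unfold Rdiv; ring).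
    f_equal. unfold nA, l, nD. lia. }
  assert (Hsplit : prog (/ 2 ^ p) (- (L + E)) (nA + l + l + nD) =
     prog (/ 2 ^ p) (- (L + E)) nA ++ prog (/ 2 ^ p) (x - L) l
     ++ prog (/ 2 ^ p) x l ++ prog (/ 2 ^ p) (x + L) nD).
  { rewrite !prog_app. rewrite <- !app_assoc. f_equal. f_equal.
    - apply prog_congr. lra.
    - f_equal; apply prog_congr; rewrite ?plus_INR, ?Rmult_plus_distr_r; lra. }
  set (c := exp (- L / sigma)).
  assert (Hc1 : c < 1) by (unfold c; rewrite <- exp_0; apply exp_increasing;
     unfold Rdiv; rewrite <- Ropp_mult_distr_l; apply Ropp_lt_gt_0_contravar;
     apply Rmult_lt_0_compat; [lra | apply Rinv_0_lt_compat; lra]).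
  assert (Hc0 : 0 < c) by apply exp_pos.
  assert (HlA : forall f g, (forall y, y + / 2 ^ p <= x - L -> f y = g y) ->
     sumR (map f (prog (/ 2 ^ p) (- (L + E)) nA)) = sumR (map g (prog (/ 2 ^ p) (- (L + E)) nA))).
  { intros f g H. apply sum_ext_prog. intros k Hk. apply H.
    assert (H1 := kh_le _ _ _ Hh Hk). lra. }
  assert (HlD : forall f g, (forall y, x + L <= y -> f y = g y) ->
     sumR (map f (prog (/ 2 ^ p) (x + L) nD)) = sumR (map g (prog (/ 2 ^ p) (x + L) nD))).
  { intros f g H. apply sum_ext_prog. intros k Hk. apply H.
    assert (0 <= INR k * / 2 ^ p) by (apply Rmult_le_pos; [apply pos_INR | lra]). lra. }
  assert (HlB : forall f g, (forall y, x - L <= y -> y + / 2 ^ p <= x -> f y = g y) ->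
     sumR (map f (prog (/ 2 ^ p) (x - L) l)) = sumR (map g (prog (/ 2 ^ p) (x - L) l))).
  { intros f g H. apply sum_ext_prog. intros k Hk. apply H.
    - assert (0 <= INR k * / 2 ^ p) by (apply Rmult_le_pos; [apply pos_INR | lra]). lra.
    - assert (H1 := kh_le _ _ _ Hh Hk). lra. }
  assert (HlC : forall f g, (forall y, x <= y -> y + / 2 ^ p <= x + L -> f y = g y) ->
     sumR (map f (prog (/ 2 ^ p) x l)) = sumR (map g (prog (/ 2 ^ p) x l))).
  { intros f g H. apply sum_ext_prog. intros k Hk. apply H.
    - assert (0 <= INR k * / 2 ^ p) by (apply Rmult_le_pos; [apply pos_INR | lra]). lra.
    - assert (H1 := kh_le _ _ _ Hh Hk). lra. }
  destruct (central (/ 2 ^ p) sigma x Hs l) as [Cen1 Cen2].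
  rewrite Hlh in Cen1, Cen2. fold c in Cen1, Cen2.
  assert (Hlam : clap_lambda p L E sigma x = 2 * sigma * (1 - c) + 2 * c * E).
  { unfold clap_lambda. rewrite HG, Hsplit, !map_app, !sumR_app.
    rewrite (HlA _ (fun _ => c * / 2 ^ p)) by (intros y Hy; apply cell_const; auto).
    rewrite (HlD _ (fun _ => c * / 2 ^ p)) by (intros y Hy; apply cell_const; auto).
    rewrite (HlB _ (fun y => sigma * (exp ((y + / 2 ^ p - x) / sigma) - exp ((y - x) / sigma))))
      by (intros y H1 H2; apply cell_B; auto).
    rewrite (HlC _ (fun y => sigma * (exp (- (y - x) / sigma) - exp (- (y + / 2 ^ p - x) / sigma))))
      by (intros y H1 H2; apply cell_C; auto).
    rewrite !sum_cst.
    transitivity (c * (INR nA * / 2 ^ p) + c * (INR nD * / 2 ^ p) + 2 * sigma * (1 - c)).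
    - rewrite <- Cen2. clearbody c. ring.
    - rewrite HnAh, HnDh. clearbody c. ring. }
  assert (Hnum : sumR (map (fun y => y * clap_cell p L sigma x y) (gridB p (L + E)))
     = - 2 * x * c * L - / 2 ^ p * c * E + (2 * x - / 2 ^ p) * sigma * (1 - c)).
  { rewrite HG, Hsplit, !map_app, !sumR_app.
    rewrite (HlA _ (fun y => y * (c * / 2 ^ p))) by (intros y Hy; rewrite cell_const; auto).
    rewrite (HlD _ (fun y => y * (c * / 2 ^ p))) by (intros y Hy; rewrite cell_const; auto).
    rewrite (HlB _ (fun y => y * (sigma * (exp ((y + / 2 ^ p - x) / sigma) - exp ((y - x) / sigma)))))
      by (intros y H1 H2; rewrite cell_B; auto).
    rewrite (HlC _ (fun y => y * (sigma * (exp (- (y - x) / sigma) - exp (- (y + / 2 ^ p - x) / sigma)))))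
      by (intros y H1 H2; rewrite cell_C; auto).
    rewrite !sum_lin.
    transitivity (c * / 2 ^ p * (INR nA * - (L + E) + / 2 ^ p * INR nA * (INR nA - 1) / 2)
      + c * / 2 ^ p * (INR nD * (x + L) + / 2 ^ p * INR nD * (INR nD - 1) / 2)
      + (2 * x - / 2 ^ p) * sigma * (1 - c)).
    - rewrite <- Cen1. clearbody c. ring.
    - rewrite HnA, HnD. field. lra. }
  unfold clap_mean, clap_pmf.
  rewrite (map_ext (fun y => y * (clap_cell p L sigma x y / clap_lambda p L E sigma x))
     (fun y => (y * clap_cell p L sigma x y) / clap_lambda p L E sigma x)) by (intros; unfold Rdiv; ring).
  rewrite sum_div, Hnum, Hlam. fold c.
  field. split; [lra | split]; nra.
Qed.
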